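(* Let $L^n_{\mathbb{C}}$ be the set of all $A\in M_n(\mathbb{C})$ such that the Schur map $S_A(B)=A\circ B$ on $M_n(\mathbb{C})$ is nonzero and multiplicative, regarded as a group under the Schur product, and let $(L^n_{\mathbb{C}})^{+}$ be the subgroup of those $A\in L^n_{\mathbb{C}}$ that are positive matrices. Then $L^n_{\mathbb{C}}$ is a complex Lie group of complex dimension $n-1$, and $(L^n_{\mathbb{C}})^{+}$ is a compact Lie group isomorphic (as a topological group) to the $(n-1)$-torus $\mathbb{T}^{n-1}$.
   Context: $A\circ B=(a_{ij}b_{ij})$ is the entrywise product; multiplicative means $S_A(BC)=S_A(B)S_A(C)$. A positive matrix is a Hermitian matrix with nonnegative spectrum. $\mathbb{T}$ is the circle group of complex numbers of modulus one. The topology is the one inherited from $M_n(\mathbb{C})$. *)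

(* Defs.v *)
From HB Require Import structures.
From mathcomp Require Import all_boot all_order all_algebra.
From mathcomp Require Import all_classical all_reals all_analysis.
From mathcomp Require Import complex.
Export numFieldNormedType.Exports.

Set Implicit Arguments.
Unset Strict Implicit.
Unset Printing Implicit Defensive.

Import Order.TTheory GRing.Theory Num.Theory.
Local Open Scope classical_set_scope.
Local Open Scope ring_scope.
Local Open Scope complex_scope.

(* Equip R[i] with its usual (modulus) metric topology, i.e. the one of the
   numFieldType R[i]; matrices 'M[R[i]]_(m,n) then carry the product
   topology = topology inherited from C^(m*n). *)
HB.instance Definition _ (R : realType) :=
  PseudoPointedMetric.copy R[i] (R[i])^o.

Section Defs.
Variable R : realType.
Local Notation C := (R[i]).

Definition schur (m n : nat) (A B : 'M[C]_(m, n)) : 'M[C]_(m, n) :=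
  \matrix_(i, j) (A i j * B i j).

Definition schur_map_nonzero (n : nat) (A : 'M[C]_n) : Prop :=
  exists B : 'M[C]_n, schur A B <> 0.

Definition schur_map_multiplicative (n : nat) (A : 'M[C]_n) : Prop :=
  forall B D : 'M[C]_n, schur A (B *m D) = schur A B *m schur A D.

Definition Lset (n : nat) : set 'M[C]_n :=
  [set A | schur_map_nonzero A /\ schur_map_multiplicative A].

Definition adjmx (n : nat) (A : 'M[C]_n) : 'M[C]_n := \matrix_(i, j) (A j i)^*.

Definition positive_mx (n : nat) (A : 'M[C]_n) : Prop :=
  adjmx A = A /\ (forall l : C, eigenvalue A l -> 0 <= l).

Definition Lplus (n : nat) : set 'M[C]_n :=
  [set A | @Lset n A /\ positive_mx A].

(* (C^x)^m as a subset of row vectors, group law = entrywise product *)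
Definition Cstar (m : nat) : set 'rV[C]_m :=
  [set z | forall j, z 0 j != 0].

Definition torus (m : nat) : set 'rV[C]_m :=
  [set z | forall j, `|z 0 j| = 1].

Definition rowmul (m : nat) (z w : 'rV[C]_m) : 'rV[C]_m :=
  \row_j (z 0 j * w 0 j).

End Defs.

Arguments Lset R n : clear implicits.
Arguments Lplus R n : clear implicits.
Arguments Cstar R m : clear implicits.
Arguments torus R m : clear implicits.

(* Main.v *)
Require Import Defs.
From HB Require Import structures.
From mathcomp Require Import all_boot all_order all_algebra.
From mathcomp Require Import all_classical all_reals all_analysis.
From mathcomp Require Import complex.
Import numFieldNormedType.Exports.
Import Order.TTheory GRing.Theory Num.Theory.
Local Open Scope classical_set_scope.
Local Open Scope ring_scope.
Local Open Scope complex_scope.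
Set Implicit Arguments.
Unset Strict Implicit.
Unset Printing Implicit Defensive.

Definition wv (R : realType) m (z : 'rV[R[i]]_m) (i : 'I_m.+1) : R[i] :=
  if unlift ord0 i is Some j then z 0 j else 1.
Definition fmap (R : realType) m (z : 'rV[R[i]]_m) : 'M[R[i]]_m.+1 :=
  \matrix_(i, j) (wv z i / wv z j).
Definition gmap (R : realType) m (A : 'M[R[i]]_m.+1) : 'rV[R[i]]_m :=
  \row_j A (lift ord0 j) ord0.

Lemma wv0 (R : realType) m (z : 'rV[R[i]]_m) : wv z ord0 = 1.
Proof. by rewrite /wv unlift_none. Qed.
Lemma wv_lift (R : realType) m (z : 'rV[R[i]]_m) j : wv z (lift ord0 j) = z 0 j.
Proof. by rewrite /wv liftK. Qed.
Lemma wv_neq0 (R : realType) m (z : 'rV[R[i]]_m) : Cstar R m z -> forall i, wv z i != 0.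
Proof. by move=> Hz i; rewrite /wv; case: unlift => [j|]; [apply: Hz|apply: oner_neq0]. Qed.
Lemma wv_mul (R : realType) m (z w : 'rV[R[i]]_m) i : wv (rowmul z w) i = wv z i * wv w i.
Proof. by rewrite /wv; case: unlift => [j|]; rewrite ?mxE ?mulr1. Qed.

Lemma gf (R : realType) m (z : 'rV[R[i]]_m) : gmap (fmap z) = z.
Proof. by apply/rowP => j; rewrite !mxE wv_lift wv0 invr1 mulr1. Qed.

Lemma f_mul (R : realType) m (z w : 'rV[R[i]]_m) :
  fmap (rowmul z w) = schur (fmap z) (fmap w).
Proof. by apply/matrixP => i j; rewrite !mxE !wv_mul invfM mulrACA. Qed.
From mathcomp Require Import ring.

Lemma f_Lset (R : realType) m (z : 'rV[R[i]]_m) : Cstar R m z -> Lset R m.+1 (fmap z).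
Proof.
move=> Hz; split.
  exists 1%:M => H; have := congr1 (fun M : 'M[R[i]]_m.+1 => M ord0 ord0) H.
  by rewrite !mxE wv0 eqxx invr1 !mulr1 /=; apply/eqP; exact: oner_neq0.
move=> B D; apply/matrixP => i j; rewrite !mxE mulr_sumr; apply: eq_bigr => k _.
rewrite !mxE; have := wv_neq0 Hz k => hk; field.
by rewrite hk (wv_neq0 Hz j).
Qed.
Lemma schur_delta (R : realType) m (A : 'M[R[i]]_m.+1) i k :
  schur A (delta_mx i k) = A i k *: delta_mx i k.
Proof.
apply/matrixP => a b; rewrite !mxE.
by case: (a =P i) => [->|]; case: (b =P k) => [->|] /=; rewrite ?mulr1 ?mulr0.
Qed.
Lemma Lmul (R : realType) m (A : 'M[R[i]]_m.+1) :
  schur_map_multiplicative A -> forall i k j, A i j = A i k * A k j.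
Proof.
move=> HA i k j; have := congr1 (fun M : 'M[R[i]]_m.+1 => M i j) (HA (delta_mx i k) (delta_mx k j)).
rewrite mul_delta_mx !schur_delta -scalemxAl -scalemxAr mul_delta_mx scalerA !mxE !eqxx /= !mulr1.
by move=> ->; rewrite mulrC.
Qed.
Lemma Lset_f (R : realType) m (A : 'M[R[i]]_m.+1) :
  Lset R m.+1 A -> exists2 z, Cstar R m z & fmap z = A.
Proof.
move=> [[B HB] HA]; have Hm := Lmul HA.
have Hkk : forall k, A k k = 1 -> forall l, A k l * A l k = 1 by move=> k Hk l; rewrite -Hm.
have [i0 [j0 Hij]] : exists i j, A i j != 0.
  apply: contrapT => H; apply: HB; apply/matrixP => i j; rewrite !mxE.
  case: (eqVneq (A i j) 0) => [->|h]; [by rewrite mul0r | by exfalso; apply: H; exists i, j].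
have Hii : A i0 i0 = 1.
  have := Hm i0 i0 j0; move/(congr1 (fun x => x / A i0 j0)).
  by rewrite -mulrA divff // mulr1 => <-.
have Hall : forall k, A k k = 1 by move=> k; rewrite (Hm k i0 k) mulrC Hkk.
have H0 : forall k, A k ord0 * A ord0 k = 1 by move=> k; apply: Hkk.
pose z := \row_j A (lift ord0 j) ord0.
have Hw : forall i, wv z i = A i ord0.
  move=> i; rewrite /wv; case: (unliftP ord0 i) => [k ->|->].
    by rewrite mxE.
  by rewrite Hall.
exists z.
  move=> j; rewrite mxE; apply/negP => /eqP h; have := H0 (lift ord0 j).
  by rewrite h mul0r => /eqP; rewrite eq_sym oner_eq0.
apply/matrixP => i j; rewrite mxE !Hw (Hm i ord0 j); congr (_ * _).
have := H0 j => /(congr1 (fun x => x / A j ord0)).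
rewrite mul1r mulrC mulrA mulVf ?mul1r //.
by apply/negP => /eqP h; have := H0 j; rewrite h mul0r => /eqP; rewrite eq_sym oner_eq0.
Qed.
Lemma wv_diff (R : realType) m (z : 'rV[R[i]]_m) i :
  differentiable (fun z : 'rV[R[i]]_m => (wv z i : (R[i] : numFieldType))) z.
Proof.
rewrite /wv; case: unlift => [j|]; [exact: differentiable_coord | exact: differentiable_cst].
Qed.

Lemma f_diff (R : realType) m (z : 'rV[R[i]]_m) : Cstar R m z -> differentiable (@fmap R m) z.
Proof.
move=> Hz.
have -> : @fmap R m = \sum_i \sum_j (fun w => (wv w i / wv w j) *: (delta_mx i j : 'M[R[i]]_m.+1)).
  apply/funext => w; rewrite {1}(matrix_sum_delta (fmap w)) fct_sumE; apply: eq_bigr => i _.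
  by rewrite fct_sumE; apply: eq_bigr => j _; rewrite mxE.
apply: differentiable_sum => i; apply: differentiable_sum => j.
apply: differentiableZl.
have := differentiableM (wv_diff z i) (differentiableV (wv_diff z j) (wv_neq0 Hz j)).
exact.
Qed.

Lemma g_diff (R : realType) m (A : 'M[R[i]]_m.+1) : differentiable (@gmap R m) A.
Proof.
have -> : @gmap R m = \sum_i \sum_j (fun B : 'M[R[i]]_m.+1 => B (lift ord0 j) ord0 *: (delta_mx i j : 'rV[R[i]]_m)).
  apply/funext => w; rewrite {1}(matrix_sum_delta (gmap w)) fct_sumE; apply: eq_bigr => i _.
  by rewrite fct_sumE; apply: eq_bigr => j _; rewrite mxE.
apply: differentiable_sum => i; apply: differentiable_sum => j.
apply: differentiableZl; exact: differentiable_coord.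
Qed.
Lemma conj_unit (R : realType) (x : R[i]) : `|x| = 1 -> x^* = x^-1.
Proof. by move=> h; rewrite invc_norm h expr1n invr1 mul1r. Qed.

Lemma torus_Cstar (R : realType) m (z : 'rV[R[i]]_m) : torus R m z -> Cstar R m z.
Proof. by move=> h j; rewrite -normr_eq0 h oner_eq0. Qed.

Lemma wv_norm (R : realType) m (z : 'rV[R[i]]_m) : torus R m z -> forall i, `|wv z i| = 1.
Proof. by move=> h i; rewrite /wv; case: unlift => [j|]; [apply: h | rewrite normr1]. Qed.

Lemma f_torus (R : realType) m (z : 'rV[R[i]]_m) : torus R m z -> Lplus R m.+1 (fmap z).
Proof.
move=> Hz; have Hc := torus_Cstar Hz; split; first exact: f_Lset.
split.
  apply/matrixP => i j; rewrite !mxE conj_unit ?invf_div //.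
  by rewrite normrM normfV !wv_norm // invr1 mulr1.
move=> l /eigenvalueP [v Hv vn0].
pose s := \sum_i v 0 i * wv z i.
have Hj : forall j, l * v 0 j * wv z j = s.
  move=> j; have := congr1 (fun M : 'rV_m.+1 => M 0 j) Hv; rewrite !mxE => <-.
  rewrite mulr_suml; apply: eq_bigr => i _; rewrite !mxE -!mulrA mulVf ?mulr1 //.
  exact: wv_neq0.
have Hls : l * s = s *+ m.+1.
  have -> : s *+ m.+1 = \sum_(j < m.+1) s by rewrite sumr_const card_ord.
  rewrite {1}/s mulr_sumr; apply: eq_bigr => j _.
  by rewrite mulrA Hj.
case: (eqVneq s 0) => [s0|sn0].
  have [j vj] : exists j, v 0 j != 0.
    apply: contrapT => H; apply: (negP vn0); apply/eqP/rowP => j; rewrite mxE.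
    by apply/eqP; apply: contrapT => h; apply: H; exists j; apply/negP.
  have := Hj j; rewrite s0 => /eqP; rewrite !mulf_eq0 (negbTE vj) (negbTE (wv_neq0 Hc j)) !orbF.
  by move/eqP ->.
have -> : l = m.+1%:R.
  by apply: (mulIf sn0); rewrite Hls mulr_natl.
exact: ler0n.
Qed.

Lemma Lplus_f (R : realType) m (A : 'M[R[i]]_m.+1) :
  Lplus R m.+1 A -> exists2 z, torus R m z & fmap z = A.
Proof.
move=> [HL [HA _]]; have [z Hz Hf] := Lset_f HL; exists z => // j.
have := congr1 (fun M : 'M[R[i]]_m.+1 => M (lift ord0 j) ord0) HA.
rewrite -Hf !mxE wv_lift wv0 invr1 mulr1 mul1r.
move=> h.
have hz := Hz j.
have h2 : (z 0 j)^* = (z 0 j)^-1.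
  by rewrite -{1}h; exact: conjcK.
have : `|z 0 j| ^+ 2 = 1 by rewrite sqr_normc h2 mulfV.
by move/eqP; rewrite sqrp_eq1 // => /eqP.
Qed.
From mathcomp Require Import lra.

Lemma sqrt_sum_le (R : realType) (p q : R) : Num.sqrt (p ^+ 2 + q ^+ 2) <= `|p| + `|q|.
Proof.
have h : 0 <= `|p| + `|q| by rewrite addr_ge0.
rewrite -(ger0_norm h) -sqrtr_sqr ler_sqrt ?sqr_ge0 //.
rewrite -(real_normK (num_real p)) -(real_normK (num_real q)).
have := normr_ge0 p; have := normr_ge0 q; nra.
Qed.

Lemma phi_cont (R : realType) : continuous (fun v : 'rV[R]_2 => (v 0 0 +i* v 0 1) : R[i]).
Proof.
move=> v B /nbhs_ballP [e e0 He]; apply/nbhs_ballP.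
move: e0 => /=; rewrite ltcE /= => /andP [/eqP ie re].
exists (complex.Re e / 2).
  by rewrite /= divr_gt0.
move=> w Hw0; apply: He.
have Hw : forall i j, ball (v i j) (complex.Re e / 2) (w i j) := proj2 Hw0.
have h0 := Hw 0 0; have h1 := Hw 0 1.
have {h0}h0 : `|v 0 0 - w 0 0| < complex.Re e / 2 := h0.
have {h1}h1 : `|v 0 1 - w 0 1| < complex.Re e / 2 := h1.
change (`|(v 0 0 +i* v 0 1) - (w 0 0 +i* w 0 1)| < e).
rewrite ltcE normc_def /= ie eqxx /=.
apply: le_lt_trans (sqrt_sum_le _ _) _; lra.
Qed.
Lemma circle_closed (R : realType) : closed [set x : R[i] | `|x| = 1].
Proof.
have -> : [set x : R[i] | `|x| = 1] = (fun x : R[i] => `|x|) @^-1` [set 1] by [].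
apply: preimage_closed.
  move=> x _. exact: (@norm_continuous _ (R[i] : numFieldType) x).
apply: accessible_closed_set1; apply: hausdorff_accessible; exact: (@norm_hausdorff _ (R[i] : numFieldType)).
Qed.

Lemma circle_compact (R : realType) : compact [set x : R[i] | `|x| = 1].
Proof.
pose S := [set v : 'rV[R]_2 | forall i, (fun _ => `[-1, 1]%classic) i (v ord0 i)].
have cS : compact S by apply: rV_compact => i; exact: segment_compact.
have cQ := continuous_compact (continuous_subspaceT (@phi_cont R)) cS.
apply: (subclosed_compact (@circle_closed R) cQ).
move=> [a b] /= h1.
have h2 : a ^+ 2 + b ^+ 2 = 1.
  have := add_Re2_Im2 (a +i* b); rewrite h1 expr1n /= => /(congr1 (@complex.Re R)) /=.
  by [].
exists (\row_(i < 2) [:: a; b]`_i).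
  move=> i; rewrite mxE /= in_itv /=.
  case: i => [[|[|//]] ?] /=; apply/andP; split; nra.
by rewrite !mxE.
Qed.
Lemma torus_compact (R : realType) m : compact (torus R m).
Proof. exact: (rV_compact (fun (_ : 'I_m) => @circle_compact R)). Qed.

Lemma f_cont_within (R : realType) m : {within torus R m, continuous (@fmap R m)}.
Proof.
rewrite continuous_subspace_in => z /set_mem Hz.
apply: continuous_subspaceT_for => //.
exact: differentiable_continuous (f_diff (torus_Cstar Hz)).
Qed.

Lemma g_cont_within (R : realType) m (A : set 'M[R[i]]_m.+1) : {within A, continuous (@gmap R m)}.
Proof.
apply: continuous_subspaceT => B.
exact: differentiable_continuous (g_diff B).
Qed.

Lemma Lplus_img (R : realType) m : (@fmap R m) @` torus R m = Lplus R m.+1.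
Proof.
apply/seteqP; split => [_ [z Hz <-]|A HA]; first exact: f_torus.
by have [z Hz Hf] := Lplus_f HA; exists z.
Qed.

Unset Implicit Arguments.

Theorem proposition3p3 (R : realType) (n : nat) (hn : (0 < n)%N) :
  (exists (f : 'rV[R[i]]_(n.-1) -> 'M[R[i]]_n) (g : 'M[R[i]]_n -> 'rV[R[i]]_(n.-1)),
      [/\ f @` Cstar R (n.-1) = Lset R n,
          {in Cstar R (n.-1) &, forall z w, f (rowmul z w) = schur (f z) (f w)},
          (forall z, Cstar R (n.-1) z -> differentiable f z),
          (forall A, Lset R n A -> differentiable g A)
        & (forall z, Cstar R (n.-1) z -> g (f z) = z)])
  /\
  (compact (Lplus R n) /\
   exists (h : 'rV[R[i]]_(n.-1) -> 'M[R[i]]_n) (k : 'M[R[i]]_n -> 'rV[R[i]]_(n.-1)),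
      [/\ h @` torus R (n.-1) = Lplus R n,
          {in torus R (n.-1) &, forall z w, h (rowmul z w) = schur (h z) (h w)},
          {within torus R (n.-1), continuous h},
          {within Lplus R n, continuous k}
        & (forall z, torus R (n.-1) z -> k (h z) = z)]).
Proof.
case: n hn => [//|m] _ /=.
split.
  exists (@fmap R m), (@gmap R m); split.
  - apply/seteqP; split => [_ [z Hz <-]|A HA]; first exact: f_Lset.
    by have [z Hz Hf] := Lset_f HA; exists z.
  - by move=> z w _ _; exact: f_mul.
  - by move=> z Hz; exact: f_diff.
  - by move=> A _; exact: g_diff.
  - by move=> z _; exact: gf.
split.
  rewrite -Lplus_img; exact: continuous_compact (@f_cont_within R m) (@torus_compact R m).
exists (@fmap R m), (@gmap R m); split.
- exact: Lplus_img.
- by move=> z w _ _; exact: f_mul.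
- exact: f_cont_within.
- exact: g_cont_within.
- by move=> z _; exact: gf.
Qed.
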